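(* Let $\mathcal G$ be a finite connected groupoid and $\alpha=(S_g,\alpha_g)_{g\in\mathcal G}$ a unital group-type partial action of $\mathcal G$ on a commutative ring $S=\bigoplus_{y\in\mathcal G_0}S_y$, with $S_g=S1_g$ and $1_g\neq0$ for all $g$. Let $\mathcal H\in\mathrm{wSub}_\alpha(\mathcal G)$, with connected components $\mathcal H_1,\dots,\mathcal H_r$ having object sets $Y_1,\dots,Y_r$, choose $y_j\in Y_j$, and let $T=S^{\alpha_{\mathcal H}}$ and $T_{y_j}=S_{y_j}^{\alpha_{\mathcal H_j(y_j)}}$. The following are equivalent: (i) $T$ is $\alpha$-strong; (ii) for any $g,h\in\mathcal G$ with $t(g)=t(h)$ and $g^{-1}h\notin\mathcal G_T$, and any non-zero idempotent $e\in S_g\cup S_h$, there exists $t\in T$ with $\alpha_g(t1_{g^{-1}})e\neq\alpha_h(t1_{h^{-1}})e$; (iii) $T_{y_j}$ is $\alpha_{\mathcal G(y_j,y_j)}$-strong for all $1\le j\le r$.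
   Context: A groupoid is a small category with all morphisms invertible; $\mathcal G_0$ is its object set (identified with identity morphisms), $s(g),t(g)$ source and target, $\mathcal G(x,y)=\{g:s(g)=x,t(g)=y\}$, $\mathcal G(x)=\mathcal G(x,x)$; $gh$ defined iff $s(g)=t(h)$; connected means all $\mathcal G(x,y)\neq\emptyset$; connected components are full subgroupoids on classes of $x\sim y\iff\mathcal G(x,y)\ne\emptyset$; wide means containing all objects. A partial action $\alpha=(S_g,\alpha_g)_{g\in\mathcal G}$ on a ring $S$: for each $g$, $S_{t(g)}$ is an ideal of $S$, $S_g$ an ideal of $S_{t(g)}$, $\alpha_g:S_{g^{-1}}\to S_g$ a ring isomorphism; $\alpha_x=\mathrm{id}_{S_x}$; for composable $(g,h)$, $\alpha_h^{-1}(S_{g^{-1}}\cap S_h)\subseteq S_{(gh)^{-1}}$ and $\alpha_g\alpha_h(a)=\alpha_{gh}(a)$ there. Unital: $S_g=S1_g$, $1_g$ central idempotent. A partial action of a connected groupoid $\mathcal K$ on $A=\bigoplus_{y\in\mathcal K_0}A_y$ is group-type if there are $x\in\mathcal K_0$ and $\tau_y\in\mathcal K(x,y)$ ($\tau_x=x$) with $A_{\tau_y^{-1}}=A_x$, $A_{\tau_y}=A_y$ for all $y$; for non-connected $\mathcal K$ it is group-type if each restriction to a connected component is group-type. For a subgroupoid $\mathcal H$, $\alpha_{\mathcal H}=(S_h,\alpha_h)_{h\in\mathcal H}$ acts on $\bigoplus_{z\in\mathcal H_0}S_z$; $\mathrm{wSub}_\alpha(\mathcal G)$ is the set of wide subgroupoids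 $\mathcal H$ with $\alpha_{\mathcal H}$ group-type. For a subgroupoid $\mathcal K$ and subring $A\subseteq S$, $A^{\alpha_{\mathcal K}}=\{a\in A:\alpha_k(a1_{k^{-1}})=a1_k\ \forall k\in\mathcal K\}$. For a subring $T\subseteq S$, $\mathcal G_T=\{g\in\mathcal G:\alpha_g(t1_{g^{-1}})=t1_g\ \forall t\in T\}$; for $y\in\mathcal G_0$ and subring $B\subseteq S_y$, $\mathcal G(y)_B=\{l\in\mathcal G(y):\alpha_l(b1_{l^{-1}})=b1_l\ \forall b\in B\}$. For a subring $T\subseteq S$ and $y\in\mathcal G_0$ put $T_y=T1_y$ (for a subring $B\subseteq S_y$, $B1_y=B$). $T_y$ is $\alpha_{\mathcal G(y,z)}$-strong if for any $g,h\in\mathcal G(y,z)$ with $g^{-1}h\notin\mathcal G(y)_{T_y}$ and any non-zero idempotent $e\in S_g\cup S_h$ there is $t_y\in T_y$ with $\alpha_g(t_y1_{g^{-1}})e\neq\alpha_h(t_y1_{h^{-1}})e$. $T$ is $\alpha$-strong if $T_y$ is $\alpha_{\mathcal G(y,z)}$-strong for all $y,z\in\mathcal G_0$. *)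

(* Defs.v *)
From HB Require Import structures.
From mathcomp Require Import all_boot all_algebra.
Set Implicit Arguments. Unset Strict Implicit. Unset Printing Implicit Defensive.
Import GRing.Theory.
Local Open Scope ring_scope.

(* A finite groupoid: finite object set, finite morphism set, source, target,
   identities, composition (comp g h = gh, meaningful when src g = tgt h), inverse. *)
Record groupoid := Groupoid {
  obj : finType;
  mor : finType;
  src : mor -> obj;
  tgt : mor -> obj;
  idm : obj -> mor;
  comp : mor -> mor -> mor;
  inv : mor -> mor;
  src_idm : forall x, src (idm x) = x;
  tgt_idm : forall x, tgt (idm x) = x;
  src_comp : forall g h, src g = tgt h -> src (comp g h) = src h;
  tgt_comp : forall g h, src g = tgt h -> tgt (comp g h) = tgt g;
  compA : forall f g h, src f = tgt g -> src g = tgt h ->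
            comp f (comp g h) = comp (comp f g) h;
  comp_idl : forall g, comp (idm (tgt g)) g = g;
  comp_idr : forall g, comp g (idm (src g)) = g;
  src_inv : forall g, src (inv g) = tgt g;
  tgt_inv : forall g, tgt (inv g) = src g;
  comp_inv : forall g, comp g (inv g) = idm (tgt g);
  inv_comp : forall g, comp (inv g) g = idm (src g)
}.

Section Defs.
Variable G : groupoid.

Definition connected : Prop :=
  forall x y : obj G, exists g : mor G, src g = x /\ tgt g = y.

Definition wide_subgroupoid (H : mor G -> Prop) : Prop :=
  (forall x, H (idm x)) /\
  (forall g h, H g -> H h -> src g = tgt h -> H (comp g h)) /\
  (forall g, H g -> H (inv g)).

Definition Hconn (H : mor G -> Prop) (x y : obj G) : Prop :=
  exists h, H h /\ src h = x /\ tgt h = y.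

Variable S : comNzRingType.
(* e g = 1_g, al g = alpha_g (only meaningful on S_{g^-1} = S 1_{g^-1}) *)
Variables (e : mor G -> S) (al : mor G -> S -> S).

Definition inI (g : mor G) (a : S) : Prop := a * e g = a.

Definition unital_partial_action : Prop :=
  (forall g, e g * e g = e g) /\
  (forall g, e g * e (idm (tgt g)) = e g) /\
  (forall g a, inI (inv g) a -> inI g (al g a)) /\
  (forall g a b, inI (inv g) a -> inI (inv g) b -> al g (a + b) = al g a + al g b) /\
  (forall g a b, inI (inv g) a -> inI (inv g) b -> al g (a * b) = al g a * al g b) /\
  (forall g a b, inI (inv g) a -> inI (inv g) b -> al g a = al g b -> a = b) /\
  (forall g b, inI g b -> exists a, inI (inv g) a /\ al g a = b) /\
  (forall x a, inI (idm x) a -> al (idm x) a = a) /\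
  (forall g h, src g = tgt h -> forall a, inI (inv h) a ->
     inI (inv g) (al h a) -> inI h (al h a) ->
     inI (inv (comp g h)) a /\ al g (al h a) = al (comp g h) a).

(* S = (+)_{y in G_0} S_y with S_y = S 1_y *)
Definition direct_sum_decomp : Prop :=
  (forall x y : obj G, x != y -> e (idm x) * e (idm y) = 0) /\
  \sum_(y : obj G) e (idm y) = 1.

(* the restriction of alpha to the subgroupoid H, on the component with object
   set Y (a connected full subgroupoid of H), is group-type *)
Definition group_type_on (H : mor G -> Prop) (Y : obj G -> Prop) : Prop :=
  exists x, Y x /\ exists tau : obj G -> mor G,
    tau x = idm x /\
    forall y, Y y -> H (tau y) /\ src (tau y) = x /\ tgt (tau y) = y /\
      e (inv (tau y)) = e (idm x) /\ e (tau y) = e (idm y).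

Definition group_type_sub (H : mor G -> Prop) : Prop :=
  forall x, group_type_on H (Hconn H x).

Definition wSub (H : mor G -> Prop) : Prop :=
  wide_subgroupoid H /\ group_type_sub H.

Definition fixed (K : mor G -> Prop) (A : S -> Prop) : S -> Prop :=
  fun a => A a /\ forall k, K k -> al k (a * e (inv k)) = a * e k.

Definition stab (T : S -> Prop) (g : mor G) : Prop :=
  forall t, T t -> al g (t * e (inv g)) = t * e g.

Definition Tat (T : S -> Prop) (y : obj G) : S -> Prop :=
  fun a => exists t, T t /\ a = t * e (idm y).

Definition strong_at (B : S -> Prop) (y z : obj G) : Prop :=
  forall g h : mor G, src g = y -> tgt g = z -> src h = y -> tgt h = z ->
    ~ stab B (comp (inv g) h) ->
    forall f : S, f * f = f -> f != 0 -> (inI g f \/ inI h f) ->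
    exists b, B b /\ al g (b * e (inv g)) * f != al h (b * e (inv h)) * f.

Definition alpha_strong (T : S -> Prop) : Prop :=
  forall y z : obj G, strong_at (Tat T y) y z.

End Defs.

(* Main.v *)
Require Import Defs.
From mathcomp Require Import all_boot all_algebra.
Require Import Defs.
From Stdlib Require Import ClassicalEpsilon.
Import GRing.Theory.
Local Open Scope ring_scope.
Set Implicit Arguments. Unset Strict Implicit. Unset Printing Implicit Defensive.

Ltac normhyps := repeat match goal with
 | H : context[src (inv ?a)] |- _ => rewrite (src_inv a) in H
 | H : context[tgt (inv ?a)] |- _ => rewrite (tgt_inv a) in H
 | H : context[src (idm ?a)] |- _ => rewrite (src_idm a) in H
 | H : context[tgt (idm ?a)] |- _ => rewrite (tgt_idm a) in H
 end.

Ltac st := normhyps; rewrite ?src_inv ?tgt_inv ?src_idm ?tgt_idm;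
  first [ done | congruence
        | rewrite src_comp; [st | st]
        | rewrite tgt_comp; [st | st] ].

Section Grp.
Variable G : groupoid.
Implicit Types g h a b x : mor G.

Lemma invK g : inv (inv g) = g.
Proof.
have := @compA G (inv (inv g)) (inv g) g.
rewrite !src_inv tgt_inv => /(_ erefl erefl).
rewrite inv_comp (inv_comp (inv g)) src_inv comp_idl.
have -> : src g = src (inv (inv g)) by rewrite !src_inv tgt_inv.
by rewrite comp_idr.
Qed.

Lemma inv_idm (y : obj G) : inv (idm y) = idm y.
Proof.
rewrite -{1}(comp_idl (inv (idm y))) tgt_inv src_idm.
have := comp_inv (idm y). by rewrite tgt_idm.
Qed.

Lemma cancel_l a x : tgt x = src (inv a) -> comp a (comp (inv a) x) = x.
Proof.
move=> hx; rewrite compA; try st.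
rewrite comp_inv; have -> : tgt a = tgt x by rewrite hx src_inv.
exact: comp_idl.
Qed.

Lemma cancel_l' a x : src a = tgt x -> comp (inv a) (comp a x) = x.
Proof.
move=> hx; have := @cancel_l (inv a) x; rewrite invK; apply; st.
Qed.

Lemma cancel_r a x : src x = tgt a -> comp (comp x a) (inv a) = x.
Proof.
move=> hx; rewrite -compA; try st.
rewrite comp_inv -hx; exact: comp_idr.
Qed.

Lemma cancel_r' a x : src x = src a -> comp (comp x (inv a)) a = x.
Proof.
move=> hx; have := @cancel_r (inv a) x; rewrite invK; apply; st.
Qed.

Lemma inv_compg g h : src g = tgt h -> inv (comp g h) = comp (inv h) (inv g).
Proof.
move=> hgh.
have e1 : comp (comp (inv h) (inv g)) (comp g h) = idm (src h).
  rewrite compA; try st. rewrite cancel_r'; try st. by rewrite inv_comp.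
rewrite -(comp_idl (inv (comp g h))) tgt_inv src_comp //.
rewrite -e1 -compA; try st. rewrite comp_inv tgt_comp //.
rewrite -[X in _ = X]comp_idr; congr comp; st.
Qed.
End Grp.

Section Act.
Variable G : groupoid.
Variable S : comNzRingType.
Variables (e : mor G -> S) (al : mor G -> S -> S).
Hypothesis hpa : unital_partial_action e al.
Implicit Types g h a b c : mor G.
Implicit Types x y s t u : S.
Local Notation bt g t := (al g (t * e (inv g))).

Definition full g := e (inv g) = e (idm (src g)) /\ e g = e (idm (tgt g)).

Lemma eI g : e g * e g = e g. Proof. by have [h1 [h2 [h3 [h4 [h5 [h6 [h7 [h8 h9]]]]]]]] := hpa; eauto. Qed.
Lemma eT g : e g * e (idm (tgt g)) = e g. Proof. by have [h1 [h2 [h3 [h4 [h5 [h6 [h7 [h8 h9]]]]]]]] := hpa; eauto. Qed.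
Lemma alI g (x : S) : inI e (inv g) x -> inI e g (al g x).
Proof. by have [h1 [h2 [h3 [h4 [h5 [h6 [h7 [h8 h9]]]]]]]] := hpa; eauto. Qed.
Lemma alD g x y : inI e (inv g) x -> inI e (inv g) y -> al g (x + y) = al g x + al g y.
Proof. by have [h1 [h2 [h3 [h4 [h5 [h6 [h7 [h8 h9]]]]]]]] := hpa; eauto. Qed.
Lemma alM g x y : inI e (inv g) x -> inI e (inv g) y -> al g (x * y) = al g x * al g y.
Proof. by have [h1 [h2 [h3 [h4 [h5 [h6 [h7 [h8 h9]]]]]]]] := hpa; eauto. Qed.
Lemma alinj g x y : inI e (inv g) x -> inI e (inv g) y -> al g x = al g y -> x = y.
Proof. by have [h1 [h2 [h3 [h4 [h5 [h6 [h7 [h8 h9]]]]]]]] := hpa; eauto. Qed.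
Lemma alsurj g y : inI e g y -> exists x, inI e (inv g) x /\ al g x = y.
Proof. by have [h1 [h2 [h3 [h4 [h5 [h6 [h7 [h8 h9]]]]]]]] := hpa; eauto. Qed.
Lemma alid (o : obj G) (x : S) : inI e (idm o) x -> al (idm o) x = x.
Proof. by have [h1 [h2 [h3 [h4 [h5 [h6 [h7 [h8 h9]]]]]]]] := hpa; eauto. Qed.
Lemma alcomp g h : src g = tgt h -> forall x : S, inI e (inv h) x ->
     inI e (inv g) (al h x) -> inI e h (al h x) ->
     inI e (inv (comp g h)) x /\ al g (al h x) = al (comp g h) x.
Proof. by have [h1 [h2 [h3 [h4 [h5 [h6 [h7 [h8 h9]]]]]]]] := hpa; eauto. Qed.

Lemma eS g : e (inv g) * e (idm (src g)) = e (inv g).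
Proof. by have := eT (inv g); rewrite tgt_inv. Qed.
Lemma inI_sub g x : inI e g x -> inI e (idm (tgt g)) x.
Proof. by rewrite /inI => hx; rewrite -{1}hx -mulrA eT. Qed.
Lemma inI_e g : inI e g (e g). Proof. exact: eI. Qed.
Lemma inI_mulr g t : inI e g (t * e g). Proof. by rewrite /inI -mulrA eI. Qed.
Lemma inI_0 g : inI e g 0. Proof. by rewrite /inI mul0r. Qed.

Lemma al0 g : al g 0 = 0.
Proof.
have := @alD g 0 0 (inI_0 (inv g)) (inI_0 (inv g)); rewrite addr0 => h.
by apply/(@addrI _ (al g 0)); rewrite addr0 -h.
Qed.

Lemma al_e g : al g (e (inv g)) = e g.
Proof.
have [x [hx hxe]] := @alsurj g _ (inI_e g).
have h1 : al g (e (inv g)) * e g = e g.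
  rewrite -hxe -alM //; [by rewrite mulrC hx | exact: inI_e].
have h2 := alI (inI_e (inv g)).
by rewrite -h1 h2.
Qed.

Lemma btS g t : inI e g (bt g t). Proof. exact/alI/inI_mulr. Qed.
Lemma btM g s t : bt g (s * t) = bt g s * bt g t.
Proof. by rewrite -alM; [rewrite mulrACA eI | exact: inI_mulr | exact: inI_mulr]. Qed.
Lemma bt1 g : bt g 1 = e g. Proof. by rewrite mul1r al_e. Qed.
Lemma bt0 g : bt g 0 = 0. Proof. by rewrite mul0r al0. Qed.
Lemma bt_src g t : bt g (t * e (idm (src g))) = bt g t.
Proof. by rewrite -mulrA (mulrC (e (idm _))) eS. Qed.

Lemma alinv g x : inI e (inv g) x -> al (inv g) (al g x) = x.
Proof.
move=> hx.
have h1 : inI e (inv (inv g)) (al g x) by rewrite invK; exact: alI.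
have [_ ->] := @alcomp (inv g) g (src_inv g) x hx h1 (alI hx).
rewrite inv_comp alid //.
by rewrite /inI -{1}hx -mulrA eS.
Qed.

Lemma full_inv g : full g -> full (inv g).
Proof. by case=> h1 h2; rewrite /full invK src_inv tgt_inv. Qed.
Lemma full_idm (y : obj G) : full (idm y).
Proof. by rewrite /full inv_idm src_idm tgt_idm. Qed.
Lemma full_tgt g x : full g -> inI e (idm (tgt g)) x -> inI e g x.
Proof. by case=> _ h; rewrite /inI h. Qed.
Lemma full_src g x : full g -> inI e (idm (src g)) x -> inI e (inv g) x.
Proof. by case=> h _; rewrite /inI h. Qed.

Lemma R1 a b (c : S) : full b -> src a = tgt b -> inI e (inv (comp a b)) c ->
  inI e (inv a) (al b c) /\ al (comp a b) c = al a (al b c).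
Proof.
move=> fb hab hc.
have hcb : inI e (inv b) c.
  apply: full_src => //; have := inI_sub hc; by rewrite tgt_inv src_comp.
have s1 : src (comp a b) = tgt (inv b) by st.
have s2 : inI e (inv (inv b)) (al b c) by rewrite invK; exact: alI.
have s3 : inI e (inv (comp a b)) (al (inv b) (al b c)) by rewrite alinv.
have s4 : inI e (inv b) (al (inv b) (al b c)) by rewrite alinv.
have [hD _] := alcomp s1 s2 s3 s4.
rewrite cancel_r // in hD.
have [_ heq] := alcomp hab hcb hD (alI hcb).
by split.
Qed.

Lemma B1 a b t : full b -> src a = tgt b -> bt (comp a b) t = bt a (bt b t).
Proof.
move=> fb hab.
have [hD heq] := R1 fb hab (inI_mulr _ t).
rewrite heq; congr (al a _).
have [hu _] := R1 fb hab (inI_e (inv (comp a b))).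
set u := al b (e (inv (comp a b))) in hu *.
have hsub : inI e (inv b) (e (inv (comp a b))).
  apply: full_src => //; have := inI_sub (inI_e (inv (comp a b))).
  by rewrite tgt_inv src_comp.
have -> : t * e (inv (comp a b)) = (t * e (inv b)) * e (inv (comp a b)).
  by rewrite -mulrA (mulrC (e (inv b))) hsub.
rewrite alM ?inI_mulr //.
congr (_ * _).
have hib : inI e b (e (inv a)).
  apply: full_tgt => //; rewrite -hab; exact: eS.
have [c0 [hc0 hc0e]] := @alsurj b _ hib.
have s1 : inI e (inv a) (al b c0) by rewrite hc0e; exact: inI_e.
have [hc0D _] := alcomp hab hc0 s1 (alI hc0).
have : e (inv a) = e (inv a) * u.
  by rewrite -{1}hc0e -hc0D alM // hc0e.
by rewrite mulrC hu => ->.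
exact: inI_mulr.
Qed.

Lemma eR a b : full b -> src a = tgt b -> e (comp a b) = e a.
Proof.
move=> fb hab; rewrite -bt1 B1 // bt1.
case: fb => _ ->; rewrite -hab -[e (idm (src a))]mul1r bt_src.
by rewrite bt1.
Qed.

Lemma B2 a b t : full a -> src a = tgt b -> bt (comp a b) t = bt a (bt b t).
Proof.
move=> fa hab.
have hi : forall c : S, inI e (inv b) c ->
   inI e (inv (comp a b)) c /\ al a (al b c) = al (comp a b) c.
  move=> c hc; apply: alcomp => //; last exact: alI.
  apply: full_src => //; rewrite hab; exact/inI_sub/alI.
have s1 : src (inv a) = tgt (comp a b) by st.
have s2 : inI e (inv (inv a)) (al (comp a b) (e (inv (comp a b)))).
  rewrite invK; apply: full_tgt => //.
  rewrite -(tgt_comp hab); exact/inI_sub/alI/inI_e.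
have [hD _] := alcomp s1 (inI_e _) s2 (alI (inI_e _)).
rewrite cancel_l' // in hD.
have [h1 _] := hi _ (inI_e (inv b)).
have eq : e (inv (comp a b)) = e (inv b).
  by rewrite -hD mulrC h1.
rewrite eq; have [_ <-] := hi _ (inI_mulr (inv b) t).
congr (al a _).
case: fa => -> _; rewrite hab; symmetry; exact/inI_sub/btS.
Qed.

Lemma eL a b : full a -> src a = tgt b -> e (comp a b) = bt a (e b).
Proof. by move=> fa hab; rewrite -bt1 B2 // bt1. Qed.

Lemma full_comp a b : full a -> full b -> src a = tgt b -> full (comp a b).
Proof.
move=> fa fb hab; split.
  rewrite inv_compg // eR ?src_comp //; last by st.
    by case: fb.
  exact: full_inv.
by rewrite eR // tgt_comp //; case: fa.
Qed.

Section Stab.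
Variable T : S -> Prop.

Lemma SR a b : full b -> stab e al T (inv b) -> src a = tgt b ->
  stab e al T (comp a b) -> stab e al T a.
Proof.
move=> fb hib hab hs t Tt.
suff: bt (comp (comp a b) (inv b)) t = t * e (comp (comp a b) (inv b)).
  by rewrite cancel_r.
have s1 : src (comp a b) = tgt (inv b) by st.
rewrite (B1 _ (full_inv fb) s1) hib //; case: (fb) => -> _.
by rewrite -(src_comp hab) bt_src hs // eR // cancel_r.
Qed.

Lemma SL a b : full a -> stab e al T (inv a) -> src a = tgt b ->
  stab e al T (comp a b) -> stab e al T b.
Proof.
move=> fa hia hab hs t Tt.
suff: bt (comp (inv a) (comp a b)) t = t * e (comp (inv a) (comp a b)).
  by rewrite cancel_l'.
have s1 : src (inv a) = tgt (comp a b) by st.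
rewrite (B2 _ (full_inv fa) s1) hs // btM hia // -(eL (full_inv fa) s1).
case: (fa) => -> _; rewrite -mulrA; congr (_ * _).
rewrite mulrC; have := inI_sub (inI_e (comp (inv a) (comp a b))).
by rewrite tgt_comp ?tgt_inv.
Qed.

Lemma stab_Tat (y : obj G) c : src c = y -> tgt c = y ->
  (stab e al (Tat e T y) c <-> stab e al T c).
Proof.
move=> hs ht; split.
  move=> h t Tt; have := h (t * e (idm y)) (ex_intro _ t (conj Tt erefl)).
  rewrite -hs bt_src => ->; rewrite -mulrA (mulrC (e (idm _))) hs -ht.
  by rewrite eT.
move=> h _ [t [Tt ->]]; rewrite -hs bt_src h // -mulrA (mulrC (e (idm _))).
by rewrite hs -ht eT.
Qed.

End Stab.
End Act.

Lemma conj_id (G : groupoid) (g h m k1 k2 : mor G) :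
  tgt g = tgt h -> src m = tgt g -> src g = tgt k1 -> src h = tgt k2 ->
  comp (inv (comp m (comp g k1))) (comp m (comp h k2)) =
  comp (inv k1) (comp (comp (inv g) h) k2).
Proof.
move=> hgh hm h1 h2.
rewrite inv_compg; last by st.
rewrite inv_compg; last by st.
rewrite -compA; try st.
rewrite cancel_l'; last by st.
rewrite -(@compA _ (inv k1) (inv g) (comp h k2)); try st.
rewrite (@compA _ (inv g) h k2); try st.
Qed.

Section Main.
Variable G : groupoid.
Variable S : comNzRingType.
Variables (e : mor G -> S) (al : mor G -> S -> S).
Hypothesis hpa : unital_partial_action e al.
Implicit Types g h a b c m k : mor G.
Local Notation bt g t := (al g (t * e (inv g))).

Definition Q (B : S -> Prop) g h := ~ stab e al B (comp (inv g) h) ->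
  forall f : S, f * f = f -> f != 0 -> (inI e g f \/ inI e h f) ->
  exists x : S, B x /\ bt g x * f != bt h x * f.

Lemma QTat T (y : obj G) g h : src g = y -> src h = y -> tgt g = tgt h ->
  (Q (Tat e T y) g h <-> Q T g h).
Proof.
move=> <- hs ht.
have hc1 : src (comp (inv g) h) = src g by st.
have hc2 : tgt (comp (inv g) h) = src g by st.
split.
  move=> hQ hns f fI fnz hf.
  have hns' : ~ stab e al (Tat e T (src g)) (comp (inv g) h).
    by rewrite stab_Tat.
  have [_ [[t [Tt ->]] hne]] := hQ hns' f fI fnz hf.
  exists t; split => //.
  by move: hne; rewrite (bt_src hpa g t) -hs (bt_src hpa h t).
move=> hQ hns f fI fnz hf.
have hns' : ~ stab e al T (comp (inv g) h).
  by rewrite -(stab_Tat hpa _ hc1 hc2).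
have [t [Tt hne]] := hQ hns' f fI fnz hf.
exists (t * e (idm (src g))); split; first by exists t.
rewrite (bt_src hpa g t); have -> : e (idm (src g)) = e (idm (src h)) by rewrite hs.
by rewrite (bt_src hpa).
Qed.

Lemma bt_conj m g k t : full e m -> full e k -> src m = tgt g -> src g = tgt k ->
  bt k t = t * e k ->
  bt (comp m (comp g k)) t = al m (bt g t).
Proof.
move=> fm fk hm hk htk.
rewrite (B2 hpa _ fm); last by st.
rewrite (B1 hpa _ fk hk) htk.
case: (fk) => _ ->; rewrite -hk (bt_src hpa).
case: (fm) => -> _; rewrite hm; congr (al m _).
exact/(inI_sub hpa)/(btS hpa).
Qed.

Lemma e_conj m g k : full e m -> full e k -> src m = tgt g -> src g = tgt k ->
  e (comp m (comp g k)) = al m (e g).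
Proof.
move=> fm fk hm hk.
rewrite (eL hpa fm); last by st.
rewrite (eR hpa fk hk).
case: (fm) => -> _; rewrite hm; congr (al m _).
exact/(inI_sub hpa)/(inI_e hpa).
Qed.

Lemma transport T g h m k1 k2 :
  tgt g = tgt h -> src m = tgt g -> src g = tgt k1 -> src h = tgt k2 ->
  full e m -> full e k1 -> full e k2 ->
  stab e al T k1 -> stab e al T (inv k1) ->
  stab e al T k2 -> stab e al T (inv k2) ->
  Q T (comp m (comp g k1)) (comp m (comp h k2)) -> Q T g h.
Proof.
move=> hgh hm h1 h2 fm fk1 fk2 s1 s1i s2 s2i hQ hns f fI fnz hf.
have fz : inI e (idm (tgt g)) f.
  by case: hf => /(inI_sub hpa) //; rewrite hgh.
have fmD : inI e (inv m) f by apply: (full_src fm); rewrite hm.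
have egD : forall x, tgt x = tgt g -> inI e (inv m) (e x).
  move=> x hx; apply: (full_src fm); rewrite hm -hx.
  exact/(inI_sub hpa)/(inI_e hpa).
have hns' : ~ stab e al T (comp (inv (comp m (comp g k1))) (comp m (comp h k2))).
  rewrite conj_id // => hst; apply: hns.
  have s1' : stab e al T (inv (inv k1)) by rewrite invK.
  have hh : src (inv k1) = tgt (comp (comp (inv g) h) k2) by st.
  have := SL hpa (full_inv fk1) s1' hh hst.
  apply: (SR hpa fk2 s2i); st.
have fI' : al m f * al m f = al m f by rewrite -(alM hpa) // fI.
have fnz' : al m f != 0.
  apply/eqP => h0; move/eqP: fnz; apply.
  by apply: (alinj hpa fmD (inI_0 _ _)); rewrite h0 (al0 hpa).
have hf' : inI e (comp m (comp g k1)) (al m f) \/ inI e (comp m (comp h k2)) (al m f).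
  rewrite /inI e_conj // e_conj //; last by rewrite hm.
  rewrite -!(alM hpa) //; try (apply: egD; done).
  by case: hf => ->; [left | right].
have [t [Tt hne]] := hQ hns' _ fI' fnz' hf'.
exists t; split => //.
apply/eqP => heq; move/eqP: hne; apply.
rewrite !bt_conj //; try (by rewrite hm); try (by apply: s1); try (by apply: s2).
rewrite -!(alM hpa) ?heq //.
  apply: (full_src fm); rewrite hm hgh; exact: (inI_sub hpa (btS hpa _ _)).
apply: (full_src fm); rewrite hm; exact: (inI_sub hpa (btS hpa _ _)).
Qed.
End Main.

Section Main2.
Variable G : groupoid.
Variable S : comNzRingType.
Variables (e : mor G -> S) (al : mor G -> S -> S).
Hypothesis hpa : unital_partial_action e al.
Implicit Types g h a b c m k : mor G.
Local Notation bt g t := (al g (t * e (inv g))).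

Lemma kap_gen (H : mor G -> Prop) (Y : obj G -> Prop) (y : obj G) :
  (forall g h, H g -> H h -> src g = tgt h -> H (comp g h)) ->
  (forall g, H g -> H (inv g)) ->
  group_type_on e H Y -> Y y ->
  exists kap : obj G -> mor G, kap y = idm y /\ forall w, Y w ->
    H (kap w) /\ src (kap w) = y /\ tgt (kap w) = w /\ full e (kap w).
Proof.
move=> Hc Hi [x0 [_ [tau [_ htau]]]] hy.
have [Hy [sy [ty [ey1 ey2]]]] := htau y hy.
exists (fun w => comp (tau w) (inv (tau y))); split.
  by rewrite comp_inv ty.
move=> w hw; have [Hw [sw [tw [ew1 ew2]]]] := htau w hw.
have hs : src (tau w) = tgt (inv (tau y)) by st.
have fw : full e (tau w) by rewrite /full ew1 ew2 sw tw.
have fy : full e (tau y) by rewrite /full ey1 ey2 sy ty.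
split; first exact: (Hc _ _ Hw (Hi _ Hy) hs).
split; first by st.
split; first by st.
exact: (full_comp hpa fw (full_inv fy)).
Qed.

Lemma Hconn_refl (H : mor G -> Prop) y : wide_subgroupoid H -> Hconn H y y.
Proof. by case=> Hid _; exists (idm y); rewrite src_idm tgt_idm. Qed.
Lemma Hconn_sym (H : mor G -> Prop) y w : wide_subgroupoid H -> Hconn H y w -> Hconn H w y.
Proof. by case=> _ [_ Hi] [k [Hk [<- <-]]]; exists (inv k); rewrite src_inv tgt_inv; auto. Qed.
Lemma Hconn_trans (H : mor G -> Prop) y w v : wide_subgroupoid H ->
  Hconn H y w -> Hconn H w v -> Hconn H y v.
Proof.
case=> _ [Hc _] [k [Hk [<- <-]]] [l [Hl [hl <-]]].
exists (comp l k); split; first by apply: Hc.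
by rewrite src_comp // tgt_comp.
Qed.

Lemma construct (H : mor G -> Prop) (hH : wSub e H)
  (horth : forall x y : obj G, x != y -> e (idm x) * e (idm y) = 0)
  (y : obj G) (b : S) :
  inI e (idm y) b ->
  (forall k, H k -> src k = y -> tgt k = y -> bt k b = b * e k) ->
  exists t, fixed e al H (fun _ => True) t /\ t * e (idm y) = b /\
    forall w, ~ Hconn H y w -> t * e (idm w) = 0.
Proof.
move=> hb hfix.
have [hW Hgt] := hH; have [Hid [Hc Hi]] := hW.
have [kap [kapy kapP]] := kap_gen Hc Hi (Hgt y) (Hconn_refl y hW).
pose F w := match excluded_middle_informative (Hconn H y w) with
            | left _ => bt (kap w) b | right _ => 0 end.
have FS : forall w, F w * e (idm w) = F w.
  move=> w; rewrite /F; case: excluded_middle_informative => hw; last by rewrite mul0r.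
  have [_ [_ [tw _]]] := kapP w hw.
  have := inI_sub hpa (btS hpa (kap w) b); by rewrite tw.
have Fw : forall w, (\sum_u F u) * e (idm w) = F w.
  move=> w; rewrite mulr_suml (bigD1 w) //= FS big1 ?addr0 // => u hu.
  by rewrite -FS -mulrA horth ?mulr0.
have Fyes : forall w, Hconn H y w -> F w = bt (kap w) b.
  by move=> w hw; rewrite /F; case: excluded_middle_informative.
have Fno : forall w, ~ Hconn H y w -> F w = 0.
  by move=> w hw; rewrite /F; case: excluded_middle_informative.
exists (\sum_u F u); split; last split.
- split=> // k Hk.
  rewrite -(bt_src hpa) Fw.
  have -> : (\sum_u F u) * e k = (\sum_u F u) * e (idm (tgt k)) * e k.
    by rewrite -mulrA (mulrC (e (idm _))) (eT hpa).
  rewrite Fw.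
  case: (classic (Hconn H y (src k))) => ha.
    have hc : Hconn H y (tgt k).
      by apply: (Hconn_trans hW ha); exists k.
    rewrite Fyes // Fyes //.
    have [Ha [sa [ta fa]]] := kapP _ ha.
    have [Hcc [sc [tc fc]]] := kapP _ hc.
    rewrite -(B1 hpa _ fa); last by rewrite ta.
    set mm := comp (inv (kap (tgt k))) (comp k (kap (src k))).
    have hkm : comp k (kap (src k)) = comp (kap (tgt k)) mm.
      rewrite /mm cancel_l //; st.
    have hsm : src (kap (tgt k)) = tgt mm by rewrite /mm; st.
    have Hm : H mm.
      have h1 : src k = tgt (kap (src k)) by rewrite ta.
      have h2 : src (inv (kap (tgt k))) = tgt (comp k (kap (src k))) by st.
      exact: (Hc _ _ (Hi _ Hcc) (Hc _ _ Hk Ha h1) h2).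
    have sm : src mm = y by rewrite /mm; st.
    have tm : tgt mm = y by rewrite /mm; st.
    rewrite hkm (B2 hpa _ fc hsm) hfix //.
    rewrite (btM hpa) -(eL hpa fc hsm) -hkm (eR hpa fa) //.
  have hc : ~ Hconn H y (tgt k).
    move=> hc; apply: ha; apply: (Hconn_trans hW hc).
    by exists (inv k); rewrite src_inv tgt_inv; auto.
  by rewrite Fno // Fno // (bt0 hpa) mul0r.
- rewrite Fw Fyes; last exact: Hconn_refl.
  by rewrite kapy inv_idm hb (alid hpa).
- by move=> w hw; rewrite Fw Fno.
Qed.

End Main2.

Lemma Q_ext (G : groupoid) (S : comNzRingType) (e : mor G -> S) (al : mor G -> S -> S)
  (B B' : S -> Prop) g h : (forall x, B x <-> B' x) -> Q e al B g h -> Q e al B' g h.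
Proof.
move=> hB hQ hns f fI fnz hf.
have hns' : ~ stab e al B (comp (inv g) h).
  by move=> hs; apply: hns => t /hB Bt; apply: hs.
have [x [Bx hne]] := hQ hns' f fI fnz hf.
by exists x; split => //; apply/hB.
Qed.

Theorem proposition5p4 (G : groupoid) (S : comNzRingType)
  (e : mor G -> S) (al : mor G -> S -> S)
  (hconn : connected G)
  (hpa : unital_partial_action e al)
  (hsum : direct_sum_decomp e)
  (hgt : group_type_on e (fun _ => True) (fun _ => True))
  (hnz : forall g, e g != 0)
  (H : mor G -> Prop) (hH : wSub e H)
  (r : nat) (ys : 'I_r -> obj G)
  (hys_cover : forall x, exists j, Hconn H (ys j) x)
  (hys_distinct : forall j k, Hconn H (ys j) (ys k) -> j = k) :
  let T := fixed e al H (fun _ => True) in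
  (alpha_strong e al T <->
   (forall g h : mor G, tgt g = tgt h -> ~ stab e al T (comp (inv g) h) ->
      forall f : S, f * f = f -> f != 0 -> (inI e g f \/ inI e h f) ->
      exists t, T t /\ al g (t * e (inv g)) * f != al h (t * e (inv h)) * f)) /\
  (alpha_strong e al T <->
   (forall j : 'I_r,
      strong_at e al
        (fixed e al (fun k => H k /\ src k = ys j /\ tgt k = ys j)
                    (fun a => inI e (idm (ys j)) a))
        (ys j) (ys j))).
Proof.
move=> T.
have [hW Hgt] := hH; have [Hid [Hc Hi]] := hW.
have horth := hsum.1.
have stabH : forall k, H k -> stab e al T k.
  by move=> k hk t [_ ht]; apply: ht.
have Hfull : forall y w, Hconn H y w ->
    exists k, H k /\ src k = y /\ tgt k = w /\ full e k.
  move=> y w hw.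
  have [kap [_ kapP]] := kap_gen hpa Hc Hi (Hgt y) (Hconn_refl y hW).
  by exists (kap w); apply: kapP.
have Gfull : forall y w : obj G, exists k, src k = y /\ tgt k = w /\ full e k.
  move=> y w.
  have Tc : forall g h : mor G, True -> True -> src g = tgt h -> True by [].
  have Ti : forall g : mor G, True -> True by [].
  have [kap [_ kapP]] := kap_gen hpa Tc Ti hgt (I : (fun _ => True) y).
  by have [_ [? [? ?]]] := kapP w I; exists (kap w).
have Bj : forall (y : obj G) x,
    fixed e al (fun k => H k /\ src k = y /\ tgt k = y)
      (fun a => inI e (idm y) a) x <-> Tat e T y x.
  move=> y x; split.
    move=> [hx hfix].
    have [t [Tt [htx _]]] := construct hpa hH horth hx
      (fun k Hk sk tk => hfix k (conj Hk (conj sk tk))).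
    by exists t.
  move=> [t [Tt ->]]; split; first exact: (inI_mulr hpa).
  move=> k [Hk [sk tk]].
  rewrite -sk (bt_src hpa) (stabH k Hk t Tt) -mulrA (mulrC (e (idm _))) sk -tk.
  by rewrite (eT hpa).
have i_to_ii : alpha_strong e al T -> forall g h, tgt g = tgt h -> Q e al T g h.
  move=> hi g h hgh.
  case: (classic (Hconn H (src g) (src h))) => hc.
    have [k [Hk [sk [tk fk]]]] := Hfull _ _ hc.
    have s1 : src (idm (tgt g)) = tgt g by rewrite src_idm.
    have s2 : src g = tgt (idm (src g)) by rewrite tgt_idm.
    have s3 : src h = tgt k by [].
    apply: (transport hpa hgh s1 s2 s3 (full_idm e _) (full_idm e _) fk
             (stabH _ (Hid _)) (stabH _ (Hi _ (Hid _))) (stabH _ Hk) (stabH _ (Hi _ Hk))).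
    set g' := comp (idm (tgt g)) (comp g (idm (src g))).
    set h' := comp (idm (tgt g)) (comp h k).
    have sg' : src g' = src g by rewrite /g'; st.
    have sh' : src h' = src g by rewrite /h'; st.
    have tt' : tgt g' = tgt h' by rewrite /g' /h'; st.
    apply/(QTat hpa _ sg' sh' tt').
    exact: (hi (src g) (tgt g') g' h' sg' erefl sh' (esym tt')).
  have hb : inI e (idm (src g)) (e (idm (src g))) by exact: (inI_e hpa).
  have hfix : forall k, H k -> src k = src g -> tgt k = src g ->
      al k (e (idm (src g)) * e (inv k)) = e (idm (src g)) * e k.
    move=> k _ sk tk; rewrite -[e (idm (src g))]mul1r -sk (bt_src hpa) (bt1 hpa).
    by rewrite mul1r mulrC sk -tk (eT hpa).
  have [t0 [Tt0 [ht0y ht0n]]] := construct hpa hH horth hb hfix.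
  move=> hns f fI fnz hf.
  case: (eqVneq (e g * f) (e h * f)) => hE.
    exists t0; split => //.
    rewrite -(bt_src hpa g) ht0y -[e (idm (src g))]mul1r (bt_src hpa) (bt1 hpa).
    rewrite -(bt_src hpa h) ht0n // (bt0 hpa) mul0r.
    have -> : e g * f = f.
      case: hf => hf; first by rewrite mulrC.
      by rewrite hE mulrC.
    by [].
  exists 1; split; last by rewrite !(bt1 hpa).
  by split => // k _; rewrite (bt1 hpa) mul1r.
split.
  split; first exact: i_to_ii.
  move=> hii y z g h sg tg sh th.
  apply/(QTat hpa _ sg sh); first by rewrite tg th.
  by apply: hii; rewrite tg th.
split.
  move=> hi j g h sg tg sh th.
  apply: (Q_ext (B := Tat e T (ys j))); first by move=> x; rewrite Bj.
  exact: (hi (ys j) (ys j) g h sg tg sh th).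
move=> hiii y z g h sg tg sh th.
have [j hj] := hys_cover y.
have [k [Hk [sk [tk fk]]]] := Hfull _ _ hj.
have [m [sm [tm fm]]] := Gfull z (ys j).
have hgh : tgt g = tgt h by rewrite tg th.
apply/(QTat hpa _ sg sh hgh).
have s1 : src m = tgt g by rewrite sm tg.
have s2 : src g = tgt k by rewrite sg tk.
have s3 : src h = tgt k by rewrite sh tk.
apply: (transport hpa hgh s1 s2 s3 fm fk fk
          (stabH _ Hk) (stabH _ (Hi _ Hk)) (stabH _ Hk) (stabH _ (Hi _ Hk))).
set g' := comp m (comp g k).
set h' := comp m (comp h k).
have sg' : src g' = ys j by rewrite /g'; st.
have sh' : src h' = ys j by rewrite /h'; st.
have tg' : tgt g' = ys j by rewrite /g'; st.
have th' : tgt h' = ys j by rewrite /h'; st.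
apply/(QTat hpa _ sg' sh'); first by rewrite tg' th'.
apply: (Q_ext (B := fixed e al (fun k => H k /\ src k = ys j /\ tgt k = ys j)
                    (fun a => inI e (idm (ys j)) a))).
  by move=> x; rewrite Bj.
exact: (hiii j g' h' sg' tg' sh' th').
Qed.
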